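(* Let $q$ be a prime power, $d$ a positive divisor of $q-1$, $m=\frac{q-1}{d}$, $C$ the index $d$ subgroup of $\mathbb{F}_q^{\ast}$, and $\omega$ a primitive root of $\mathbb{F}_q$; put $C_i=\omega^iC$. Then $\operatorname{GCP}(d,q)$ is isomorphic as a permutation group to $\operatorname{Hol}(C)\wr_{\mathrm{imp}}\operatorname{Sym}(d)$. More precisely, let $\beta_\omega:C\times\{0,\dots,d-1\}\to\mathbb{F}_q^{\ast}$, $(c,i)\mapsto c\omega^i$, and let $\iota_\omega$ map the wreath product element $(\psi,(\lambda(s_i,b_i))_{i=0,\dots,d-1})$ to the restriction to $\mathbb{F}_q^{\ast}$ of $$f_\omega\big((\omega^{\psi(i)-is_{\psi(i)}}b_{\psi(i)})_{i=0,\dots,d-1},\,(s_{\psi(i)})_{i=0,\dots,d-1}\big)$$ (with exponents $s_{\psi(i)}$ taken as representatives in $\{1,\dots,m\}$). Then $\beta_\omega$ is a bijection, $\iota_\omega$ is a group isomorphism onto $\operatorname{GCP}(d,q)$, and $\beta_\omega(x^g)=\beta_\omega(x)^{\iota_\omega(g)}$ for all $g$ and all $x\in C\times\{0,\dots,d-1\}$. The inverse of $\iota_\omega$ sends $f_\omega(\vec a,\vec r)_{\mid\mathbb{F}_q^{\ast}}\in\operatorname{GCP}(d,q)$ to $$\big(\psi,(\lambda(r_{\psi^{-1}(i)},\,\omega^{r_{\psi^{-1}(i)}\psi^{-1}(i)-i}a_{\psi^{-1}(i)}))_{i=0,\dots,d-1}\big),$$ where $\psi\in\operatorname{Sym}(d)$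 is the unique permutation with $f_\omega(\vec a,\vec r)(C_i)=C_{\psi(i)}$ for all $i$. Moreover: (1) $\iota_\omega^{-1}(\operatorname{CP}(d,q))$ is the set of all elements $(\psi,(\lambda(s,b_i))_{i})$ with $\psi\in\operatorname{Sym}(d)$, $s$ an integer coprime to $m$ (the same for all $i$), and $b_0,\dots,b_{d-1}\in C$; (2) $\iota_\omega^{-1}(\operatorname{FOCP}(d,q))$ is the set of all elements $(\psi,(\lambda(1,b_i))_i)$ with $\psi\in\operatorname{Sym}(d)$ and $b_i\in C$, i.e. the subgroup $C_{\mathrm{reg}}\wr_{\mathrm{imp}}\operatorname{Sym}(d)$, where $C_{\mathrm{reg}}=\{\lambda(1,c):c\in C\}$.
   Context: Groups act on the right: for permutations $\sigma,\psi$, the product $\sigma\psi$ means ''apply $\sigma$ first, then $\psi$''. For $\vec a=(a_0,\dots,a_{d-1})\in\mathbb{F}_q^d$ and $\vec r=(r_0,\dots,r_{d-1})\in\{1,\dots,m\}^d$, $f_\omega(\vec a,\vec r):\mathbb{F}_q\to\mathbb{F}_q$ is the map with $0\mapsto 0$ and $x\mapsto a_ix^{r_i}$ for $x\in C_i$ (an ''index $d$ generalized cyclotomic mapping''); if all $r_i$ equal a common $r$ it is an ''$r$-th order cyclotomic mapping'', and ''first-order'' if $r=1$. $\operatorname{GCP}(d,q)$ (resp. $\operatorname{CP}(d,q)$, $\operatorname{FOCP}(d,q)$) is the permutation group on $\mathbb{F}_q^{\ast}$ consisting of restrictions to $\mathbb{F}_q^{\ast}$ of those index $d$ generalized cyclotomic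 mappings (resp. $r$-th order cyclotomic mappings for some $r$, resp. first-order cyclotomic mappings) that are permutations of $\mathbb{F}_q$. $\operatorname{Hol}(C)$ is the permutation group on $C$ of all maps $\lambda(r,a):c\mapsto ac^r$ with $a\in C$ and $r$ an integer coprime to $|C|=m$. For a permutation group $G\le\operatorname{Sym}(\Omega)$, $\operatorname{Sym}(d)$ denotes the symmetric group on $\{0,\dots,d-1\}$, and $G\wr_{\mathrm{imp}}\operatorname{Sym}(d)$ is the permutation group on $\Omega\times\{0,\dots,d-1\}$ whose elements are pairs $(\sigma,(g_0,\dots,g_{d-1}))$ with $\sigma\in\operatorname{Sym}(d)$, $g_i\in G$, acting by $(x,i)\mapsto(g_{\sigma(i)}(x),\sigma(i))$. An isomorphism of permutation groups $G\le\operatorname{Sym}(\Omega)\to H\le\operatorname{Sym}(\Lambda)$ is a pair $(\beta,\iota)$ with $\beta:\Omega\to\Lambda$ a bijection and $\iota:G\to H$ a group isomorphism with $\beta(x^g)=\beta(x)^{\iota(g)}$. *)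

(* Defs.v *)
From HB Require Import structures.
From mathcomp Require Import all_boot all_order all_algebra all_fingroup.
Unset Printing Implicit Defensive.
Import GRing.Theory.
Local Open Scope ring_scope.

Definition mC (F : finFieldType) (d : nat) : nat := (#|F|.-1 %/ d)%N.

(* C = the index-d subgroup of F^*, i.e. the unique subgroup of order m,
   namely {x | x^m = 1} *)
Definition inC {F : finFieldType} (d : nat) (x : F) : bool := x ^+ mC F d == 1.

Definition Ctype (F : finFieldType) (d : nat) := {x : F | inC d x}.
HB.instance Definition _ (F : finFieldType) (d : nat) := Finite.on (Ctype F d).

Definition Fstar (F : finFieldType) := {x : F | x != 0}.
HB.instance Definition _ (F : finFieldType) := Finite.on (Fstar F).

Definition fstar1 (F : finFieldType) : Fstar F :=
  exist (fun x : F => x != 0) 1 (oner_neq0 F).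

Definition Omega (F : finFieldType) (d : nat) := (Ctype F d * 'I_d)%type.
HB.instance Definition _ (F : finFieldType) (d : nat) := Finite.on (Omega F d).

Definition inCi {F : finFieldType} (d : nat) (w : F) (i : nat) (x : F) : bool :=
  inC d (x / w ^+ i).

Definition cycidx {F : finFieldType} (d : nat) (w x : F) : option 'I_d :=
  [pick i : 'I_d | inCi d w i x].

Definition fgen {F : finFieldType} (d : nat) (w : F)
  (a : 'I_d -> F) (r : 'I_d -> nat) (x : F) : F :=
  if x == 0 then 0 else
  if cycidx d w x is Some i then a i * x ^+ r i else 0.

Definition GCP {F : finFieldType} (d : nat) (w : F) (p : {perm Fstar F}) : Prop :=
  exists (a : 'I_d -> F) (r : 'I_d -> nat),
    [/\ (forall i, 0 < r i <= mC F d)%N, bijective (fgen d w a r)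
      & forall x : Fstar F, val (p x) = fgen d w a r (val x)].

Definition CP {F : finFieldType} (d : nat) (w : F) (p : {perm Fstar F}) : Prop :=
  exists (a : 'I_d -> F) (r0 : nat),
    [/\ (0 < r0 <= mC F d)%N, bijective (fgen d w a (fun _ => r0))
      & forall x : Fstar F, val (p x) = fgen d w a (fun _ => r0) (val x)].

Definition FOCP {F : finFieldType} (d : nat) (w : F) (p : {perm Fstar F}) : Prop :=
  exists (a : 'I_d -> F),
    bijective (fgen d w a (fun _ => 1%N))
    /\ forall x : Fstar F, val (p x) = fgen d w a (fun _ => 1%N) (val x).

(* g acts on C x {0..d-1} as the wreath element (psi, (lambda(s_j, b_j))_j):
   (x, i) |-> (b_{psi i} * x ^ s_{psi i}, psi i) *)
Definition acts_as_wr {F : finFieldType} (d : nat) (g : {perm Omega F d})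
  (psi : {perm 'I_d}) (s : 'I_d -> int) (b : 'I_d -> Ctype F d) : Prop :=
  forall (x : Ctype F d) (i : 'I_d),
    (g (x, i)).2 = psi i /\ val (g (x, i)).1 = val (b (psi i)) * val x ^ s (psi i).

Definition Wr {F : finFieldType} (d : nat) (g : {perm Omega F d}) : Prop :=
  exists (psi : {perm 'I_d}) (s : 'I_d -> int) (b : 'I_d -> Ctype F d),
    (forall j, coprimez (s j) (mC F d)) /\ acts_as_wr d g psi s b.

Definition beta {F : finFieldType} (d : nat) (w : F) (ci : Omega F d) : Fstar F :=
  insubd (fstar1 F) (val ci.1 * w ^+ ci.2).

Definition repm (F : finFieldType) (d : nat) (s : int) : nat :=
  let t := absz (s %% (mC F d)%:Z)%Z in if t == 0%N then mC F d else t.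

Definition iota_r (F : finFieldType) (d : nat) (psi : {perm 'I_d}) (s : 'I_d -> int)
  (i : 'I_d) : nat := repm F d (s (psi i)).

Definition iota_a {F : finFieldType} (d : nat) (w : F) (psi : {perm 'I_d})
  (s : 'I_d -> int) (b : 'I_d -> Ctype F d) (i : 'I_d) : F :=
  w ^ ((psi i)%:Z - (i * iota_r F d psi s i)%:Z) * val (b (psi i)).

Definition blockmap {F : finFieldType} (d : nat) (w : F) (f : F -> F)
  (psi : {perm 'I_d}) : Prop :=
  forall (i : 'I_d) (y : F), inCi d w (psi i) y <-> exists2 x, inCi d w i x & f x = y.

(* Main.v *)
Require Import Defs.
From HB Require Import structures.
From mathcomp Require Import all_boot all_order all_algebra all_fingroup all_field.
From mathcomp Require Import zify ring.
From Stdlib Require Import FunctionalExtensionality.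
Import GRing.Theory Num.Theory.
Local Open Scope ring_scope.

Section Main.
Variables (F : finFieldType) (d : nat) (w : F).
Hypotheses (dpos : (0 < d)%N) (ddiv : (d %| #|F|.-1)%N)
  (wprim : (#|F|.-1).-primitive_root w).

Local Notation m := (mC F d).
Local Notation n := (#|F|.-1).

Lemma n_eq : n = (m * d)%N.
Proof. by rewrite /mC divnK. Qed.

Lemma n_gt0 : (0 < n)%N.
Proof. exact: prim_order_gt0 wprim. Qed.

Lemma m_gt0 : (0 < m)%N.
Proof. have := n_gt0; rewrite n_eq; case: (m) => //. Qed.

Lemma w_neq0 : w != 0.
Proof.
apply/eqP=> w0; have := prim_expr_order wprim; rewrite w0 expr0n.
by case: (n) n_gt0 => // k _ /eqP; rewrite eq_sym oner_eq0.
Qed.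

Lemma inC_neq0 {x : F} : inC d x -> x != 0.
Proof.
rewrite /inC => /eqP h; apply/eqP=> x0; move: h; rewrite x0 expr0n.
by case: (m) m_gt0 => // k _ /eqP; rewrite eq_sym oner_eq0.
Qed.

Lemma inC1 : @inC F d 1.
Proof. by rewrite /inC expr1n. Qed.

Lemma inCM {x y : F} : inC d x -> inC d y -> inC d (x * y).
Proof. by rewrite /inC exprMn => /eqP-> /eqP->; rewrite mulr1. Qed.

Lemma inCV {x : F} : inC d x -> inC d x^-1.
Proof. by rewrite /inC exprVn => /eqP->; rewrite invr1. Qed.

Lemma inCX {x : F} k : inC d x -> inC d (x ^+ k).
Proof. by rewrite /inC -exprM mulnC exprM => /eqP->; rewrite expr1n. Qed.

Lemma inCXz {x : F} (k : int) : inC d x -> inC d (x ^ k).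
Proof. by case: k => k Hx; [exact: inCX|rewrite /= inCV // inCX]. Qed.

Lemma unit_pow {x : F} : x != 0 -> x ^+ n = 1.
Proof.
move=> x0; have := expf_card x; have : #|F| = n.+1.
  by rewrite prednK //; apply/card_gt0P; exists 0.
move=> ->; rewrite exprS => h; apply: (@mulfI _ x x0); by rewrite h mulr1.
Qed.

Lemma decomp {x : F} : x != 0 -> exists c (i : 'I_d), inC d c /\ x = c * w ^+ i.
Proof.
move=> x0; have [k hk] := prim_rootP wprim (unit_pow x0).
exists (w ^+ ((k %/ d) * d)); exists (Ordinal (ltn_pmod k dpos)); split.
  by rewrite /inC -exprM -mulnA [(d * _)%N]mulnC -n_eq mulnC exprM (prim_expr_order wprim) expr1n.
by rewrite hk /= -exprD -divn_eq.
Qed.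

Lemma inCi_prod {c : F} (i : nat) : inC d c -> inCi d w i (c * w ^+ i).
Proof. by move=> hc; rewrite /inCi mulfK // expf_neq0 // w_neq0. Qed.

Lemma inCi_uniq {i j : 'I_d} {x : F} : inCi d w i x -> inCi d w j x -> i = j.
Proof.
rewrite /inCi => hi hj.
have x0 : x != 0.
  by apply/eqP=> x0; move: (inC_neq0 hi); rewrite x0 mul0r eqxx.
have : inC d ((x / w ^+ j) / (x / w ^+ i)) by rewrite inCM // inCV.
have wi : w ^+ i != 0 by rewrite expf_neq0 // w_neq0.
have wj : w ^+ j != 0 by rewrite expf_neq0 // w_neq0.
have -> : x / w ^+ j / (x / w ^+ i) = w ^+ i / w ^+ j by field; rewrite x0 wi wj.
rewrite /inC expr_div_n.
rewrite -!exprM => /eqP h.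
have wu : w ^+ (j * m) != 0 by rewrite expf_neq0 // w_neq0.
have e : w ^+ (i * m) = w ^+ (j * m) by rewrite -[LHS](divfK wu) h mul1r.
move: e => /eqP.
rewrite (eq_prim_root_expr wprim) n_eq => /eqP h2.
have : (i == j %[mod d]).
  by rewrite -(eqn_pmul2r m_gt0) !muln_modl ?m_gt0 // [(d * m)%N]mulnC h2.
by rewrite !modn_small //; move/eqP=> /val_inj.
Qed.

Lemma cycidx_prod (c : F) (i : 'I_d) : inC d c -> cycidx d w (c * w ^+ i) = Some i.
Proof.
move=> hc; rewrite /cycidx; case: pickP => [j hj|H].
  by congr Some; exact: inCi_uniq hj (inCi_prod i hc).
by move: (H i); rewrite inCi_prod.
Qed.

Lemma inCi_neq0 {i : nat} {y : F} : inCi d w i y -> y != 0.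
Proof. by move=> /inC_neq0; apply: contra => /eqP->; rewrite mul0r. Qed.

Lemma inCi_div (i : nat) (y : F) : inCi d w i y -> inC d (y / w ^+ i).
Proof. by []. Qed.

Definition c1 : Ctype F d := exist _ 1 inC1.
Definition i0 : 'I_d := Ordinal dpos.

Lemma val_beta (ci : Omega F d) : val (beta d w ci) = val ci.1 * w ^+ ci.2.
Proof.
rewrite /beta val_insubd ifT //.
by rewrite mulf_neq0 ?expf_neq0 ?w_neq0 // inC_neq0 // (valP ci.1).
Qed.

Definition binv (y : Fstar F) : Omega F d :=
  match cycidx d w (val y) with
  | Some i => (insubd c1 (val y / w ^+ i), i)
  | None => (c1, i0)
  end.

Lemma betaK : cancel (beta d w) binv.
Proof.
case=> c i; rewrite /binv val_beta /= cycidx_prod ?(valP c) //.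
congr pair; apply: val_inj; rewrite val_insubd mulfK ?expf_neq0 ?w_neq0 //.
by rewrite ifT // (valP c).
Qed.

Lemma binvK : cancel binv (beta d w).
Proof.
move=> y; have [c [i [hc e]]] := decomp (valP y).
rewrite /binv e cycidx_prod //; apply: val_inj; rewrite val_beta /= e.
by rewrite val_insubd mulfK ?expf_neq0 ?w_neq0 // hc.
Qed.

Lemma beta_inj : injective (beta d w). Proof. exact: can_inj betaK. Qed.
Lemma binv_inj : injective binv. Proof. exact: can_inj binvK. Qed.

Definition iotaf (g : {perm Omega F d}) (y : Fstar F) := beta d w (g (binv y)).
Lemma iotaf_inj g : injective (iotaf g).
Proof. by move=> x y /beta_inj /perm_inj /binv_inj. Qed.
Definition iota g : {perm Fstar F} := perm (iotaf_inj g).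

Lemma iotaE g y : iota g y = beta d w (g (binv y)).
Proof. by rewrite permE. Qed.

Lemma iota_beta g x : iota g (beta d w x) = beta d w (g x).
Proof. by rewrite iotaE betaK. Qed.

Lemma iotaM g h : iota (g * h)%g = (iota g * iota h)%g.
Proof. by apply/permP=> y; rewrite !permM !iotaE betaK permM. Qed.

Lemma iota_inj g h : iota g = iota h -> g = h.
Proof.
move=> e; apply/permP=> x; apply: beta_inj; by rewrite -!iota_beta e.
Qed.

Lemma modm_ge0 (s : int) : (0 <= (s %% m)%Z)%R.
Proof. by apply: modz_ge0; rewrite eqz_nat -lt0n m_gt0. Qed.

Lemma repm_range s : (0 < repm F d s <= m)%N.
Proof.
rewrite /repm; set t := (s %% m)%Z.
have t0 : (0 <= t)%R := modm_ge0 s.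
have tm : (t < m%:Z)%R by apply: ltz_pmod; rewrite ltz_nat m_gt0.
case: eqP => [_|/eqP a0]; first by rewrite m_gt0 leqnn.
rewrite lt0n a0 /=; move: tm; rewrite -(gez0_abs t0) ltz_nat; exact: ltnW.
Qed.

Lemma repm_exp (c : F) s : inC d c -> c ^+ repm F d s = c ^ s.
Proof.
move=> hc; have c0 := inC_neq0 hc.
have t0 : (0 <= (s %% m)%Z)%R := modm_ge0 s.
have e : c ^ s = c ^ (s %% m)%Z.
  rewrite {1}(divz_eq s m) expfzDr // -exprz_exp exprzAC.
  have h1 : c ^ (m%:Z) = 1 := eqP hc.
  by rewrite h1 exp1rz mul1r.
rewrite e /repm -{3}(gez0_abs t0).
case: eqP => [->|//]; exact/eqP.
Qed.

Lemma wz_sub (p q : nat) : w ^ (p%:Z - q%:Z) * w ^+ q = w ^+ p.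
Proof.
by rewrite -[w ^+ q]/(w ^ q%:Z) -expfzDr ?w_neq0 // subrK.
Qed.

Lemma vbinv (x : Fstar F) : val x = val (binv x).1 * w ^+ (binv x).2.
Proof. by rewrite -val_beta binvK. Qed.

Lemma iota_wr {g psi s b} : acts_as_wr d g psi s b ->
  forall x : Fstar F,
  val (iota g x) = fgen d w (iota_a d w psi s b) (iota_r F d psi s) (val x).
Proof.
move=> H x; rewrite -{1}(binvK x) iota_beta val_beta (vbinv x).
case: (binv x) => [c i] /=; have [h1 h2] := H c i.
rewrite h2 h1 /fgen ifF; last by apply/negbTE; rewrite mulf_neq0 ?expf_neq0 ?w_neq0 ?inC_neq0 ?(valP c).
rewrite cycidx_prod ?(valP c) // /iota_a exprMn -exprM /iota_r repm_exp ?(valP c) //.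
rewrite -[w ^+ (psi i)](wz_sub _ (i * repm F d (s (psi i)))).
ring.
Qed.
Lemma fgen0 a r : fgen d w a r 0 = 0.
Proof. by rewrite /fgen eqxx. Qed.

Lemma bij_of_perm (f : F -> F) (p : {perm Fstar F}) :
  f 0 = 0 -> (forall x : Fstar F, val (p x) = f (val x)) -> bijective f.
Proof.
move=> f0 H; apply: injF_bij => x y.
have hf z (z0 : z != 0) : f z = val (p (exist _ z z0)) by rewrite H.
have [->|x0] := eqVneq x 0; have [->|y0] := eqVneq y 0 => //.
- by rewrite f0 (hf y y0) => /esym e; move: (valP (p (exist _ y y0))); rewrite e eqxx.
- by rewrite f0 (hf x x0) => e; move: (valP (p (exist _ x x0))); rewrite e eqxx.
rewrite (hf x x0) (hf y y0) => /val_inj /perm_inj; exact: (congr1 val).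
Qed.

Definition iinvf (p : {perm Fstar F}) (x : Omega F d) := binv (p (beta d w x)).
Lemma iinvf_inj p : injective (iinvf p).
Proof. by move=> x y /binv_inj /perm_inj /beta_inj. Qed.
Definition iinv p : {perm Omega F d} := perm (iinvf_inj p).

Lemma iinvK p : iota (iinv p) = p.
Proof. by apply/permP=> y; rewrite iotaE permE /iinvf !binvK. Qed.

Lemma decomp_uniq (c c' : F) (i j : 'I_d) : inC d c -> inC d c' ->
  c * w ^+ i = c' * w ^+ j -> i = j /\ c = c'.
Proof.
move=> hc hc' e.
have ij : i = j by apply: inCi_uniq (inCi_prod i hc) _; rewrite e; exact: inCi_prod.
by split=> //; subst j; apply: (mulIf _ e); rewrite expf_neq0 // w_neq0.
Qed.

Lemma struct {a r g} : (forall i, 0 < r i <= m)%N ->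
  (forall x : Fstar F, val (iota g x) = fgen d w a r (val x)) ->
  exists psi : {perm 'I_d},
    (forall c i, (g (c, i)).2 = psi i /\
       val (g (c, i)).1 = w ^ ((r i * i)%:Z - (psi i)%:Z) * a i * val c ^+ r i)
    /\ (forall i, coprime (r i) m).
Proof.
move=> hr H.
have s1 c i : val (g (c, i)).1 * w ^+ (g (c, i)).2 = a i * val c ^+ r i * w ^+ (i * r i).
  rewrite -val_beta -iota_beta H val_beta /= /fgen ifF; last first.
    by apply/negbTE; rewrite mulf_neq0 ?expf_neq0 ?w_neq0 ?inC_neq0 ?(valP c).
  by rewrite cycidx_prod ?(valP c) // exprMn exprM mulrA.
have s2 c i : (g (c, i)).2 = (g (c1, i)).2 /\ val (g (c, i)).1 = val c ^+ r i * val (g (c1, i)).1.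
  have e : val (g (c, i)).1 * w ^+ (g (c, i)).2 =
           (val c ^+ r i * val (g (c1, i)).1) * w ^+ (g (c1, i)).2.
    by rewrite s1 -[RHS]mulrA s1 /= expr1n mulr1; ring.
  have [-> ->] := decomp_uniq _ _ _ _ (valP (g (c, i)).1) (inCM (inCX _ (valP c)) (valP (g (c1, i)).1)) e.
  by [].
pose psi0 i := (g (c1, i)).2.
pose psi' k := (g^-1 (c1, k))%g.2.
have psi'K : cancel psi' psi0.
  move=> k; rewrite /psi0 /psi' -(s2 (g^-1 (c1, k))%g.1 (g^-1 (c1, k))%g.2).1.
  by rewrite -surjective_pairing permKV.
have psi'_inj : injective psi' := can_inj psi'K.
have [h hK Kh] := injF_bij psi'_inj.
have e0 : psi0 =1 h by move=> y; rewrite -{1}(Kh y) psi'K.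
have psi0_inj : injective psi0 by move=> x y; rewrite !e0; exact: (can_inj Kh).
pose psi := perm psi0_inj.
have s4 i : val (g (c1, i)).1 = w ^ ((r i * i)%:Z - (psi i)%:Z) * a i.
  have w0 : w ^+ (psi i) != 0 by rewrite expf_neq0 // w_neq0.
  apply: (mulIf w0); have := s1 c1 i; rewrite /= expr1n mulr1 permE => ->.
  by rewrite mulrAC wz_sub mulnC mulrC.
exists psi; split.
  move=> c i; have [-> ->] := s2 c i; rewrite s4 !permE; split=> //; ring.
move=> i; apply/negPn/negP => ncop.
set gg := gcdn (r i) m.
have gg0 : (0 < gg)%N by rewrite gcdn_gt0 m_gt0 orbT.
have gg1 : (1 < gg)%N by move: ncop gg0; rewrite /coprime -/gg; case: (gg) => [|[|k]].
have ggm : (gg %| m)%N := dvdn_gcdr _ _.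
have ggr : (gg %| r i)%N := dvdn_gcdl _ _.
set M := (m %/ gg)%N.
have hM : m = (M * gg)%N by rewrite divnK.
have M0 : (0 < M)%N by rewrite divn_gt0 // dvdn_leq // m_gt0.
have Mm : (M < m)%N by rewrite ltn_Pdiv // m_gt0.
set e := (d * M)%N.
have hz : inC d (w ^+ e).
  rewrite /inC -exprM -(prim_order_dvd wprim) n_eq /e.
  by apply/dvdnP; exists M; ring.
have z1 : w ^+ e != 1.
  rewrite -(prim_order_dvd wprim); apply/negP=> /dvdn_leq.
  rewrite /e n_eq muln_gt0 dpos M0 => /(_ isT); rewrite mulnC leq_pmul2l //.
  by rewrite leqNgt Mm.
have zr : (w ^+ e) ^+ r i = 1.
  apply/eqP; rewrite -exprM -(prim_order_dvd wprim) n_eq /e.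
  rewrite -(divnK ggr) hM; apply/dvdnP; exists (r i %/ gg)%N; ring.
pose z : Ctype F d := exist (fun x : F => inC d x) _ hz.
have : g (z, i) = g (c1, i).
  have [e1 e2] := s2 z i.
  rewrite [g (z, i)]surjective_pairing [g (c1, i)]surjective_pairing e1.
  by congr pair; apply: val_inj; rewrite e2 /= zr mul1r.
by move/perm_inj => [] /eqP; rewrite (negbTE z1).
Qed.
Lemma wr_of_struct {a : 'I_d -> F} {r : 'I_d -> nat} {g : {perm Omega F d}} {psi : {perm 'I_d}} :
  (forall c i, (g (c, i)).2 = psi i /\
       val (g (c, i)).1 = w ^ ((r i * i)%:Z - (psi i)%:Z) * a i * val c ^+ r i) ->
  acts_as_wr d g psi (fun j => Posz (r ((psi^-1)%g j))) (fun j => (g (c1, (psi^-1)%g j)).1).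
Proof.
move=> H c i; have [h1 h2] := H c i; split=> //.
rewrite h2 permK; have [_ h3] := H c1 i; rewrite h3 /= expr1n mulr1.
by [].
Qed.

Lemma blockmap_of {a : 'I_d -> F} {r : 'I_d -> nat} {g : {perm Omega F d}} {psi : {perm 'I_d}} :
  (forall x : Fstar F, val (iota g x) = fgen d w a r (val x)) ->
  (forall c i, (g (c, i)).2 = psi i) -> blockmap d w (fgen d w a r) psi.
Proof.
move=> H Hs i y; split.
  move=> hy; have y0 := inCi_neq0 hy.
  pose c' : Ctype F d := exist (fun x : F => inC d x) _ hy.
  case ex: ((g^-1)%g (c', psi i)) => [c k].
  have gx : g (c, k) = (c', psi i) by rewrite -ex permKV.
  have ki : k = i by apply: (@perm_inj _ psi); rewrite -(Hs c k) gx.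
  subst k; exists (val (beta d w (c, i))).
    by rewrite val_beta; exact: inCi_prod (valP c).
  by rewrite -H iota_beta gx val_beta /= divfK // expf_neq0 // w_neq0.
case=> x hx <-; have x0 := inCi_neq0 hx.
pose X : Fstar F := exist (fun x : F => x != 0) _ x0.
have -> : x = val X by [].
rewrite -H -(binvK X) iota_beta val_beta.
case ex: (binv X) => [c k].
have ki : k = i.
  apply: inCi_uniq _ hx; rewrite [x](_ : _ = val X) // vbinv ex.
  exact: inCi_prod (valP c).
by rewrite Hs /= -ki; exact: inCi_prod (valP _).
Qed.

Lemma blockmap_uniq {f : F -> F} {psi psi' : {perm 'I_d}} :
  blockmap d w f psi -> blockmap d w f psi' -> psi = psi'.
Proof.
move=> h h'; apply/permP=> i.
have hi : inCi d w i (w ^+ i) by rewrite -[w ^+ i]mul1r; exact: inCi_prod inC1.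
apply: (@inCi_uniq _ _ (f (w ^+ i))).
  by apply/(h i); exists (w ^+ i).
by apply/(h' i); exists (w ^+ i).
Qed.

Lemma repm_1 : repm F d 1 = 1%N.
Proof.
rewrite /repm; have [m1|m1] : m = 1%N \/ (1 < m)%N.
  by case: (m) m_gt0 => [|[|k]] // _; [left|right].
  by rewrite m1.
by rewrite modz_small //= ltz_nat.
Qed.
Lemma main_sec :
  bijective (beta d w) /\
  exists iota : {perm Omega F d} -> {perm Fstar F},
    (forall g psi s b, (forall j, coprimez (s j) (mC F d)) -> acts_as_wr d g psi s b ->
       forall x : Fstar F,
         val (iota g x) = fgen d w (iota_a d w psi s b) (iota_r F d psi s) (val x)) /\
    (forall g h, Wr d g -> Wr d h -> iota (g * h)%g = (iota g * iota h)%g) /\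
    (forall g h, Wr d g -> Wr d h -> iota g = iota h -> g = h) /\
    (forall p, GCP d w p <-> exists2 g, Wr d g & iota g = p) /\
    (forall g, Wr d g -> forall x, beta d w (g x) = iota g (beta d w x)) /\
    (forall (a : 'I_d -> F) (r : 'I_d -> nat),
       (forall i, 0 < r i <= mC F d)%N -> bijective (fgen d w a r) ->
       (exists! psi : {perm 'I_d}, blockmap d w (fgen d w a r) psi) /\
       forall psi, blockmap d w (fgen d w a r) psi ->
       forall g, Wr d g -> (forall x : Fstar F, val (iota g x) = fgen d w a r (val x)) ->
       forall (x : Ctype F d) (i : 'I_d),
         (g (x, i)).2 = psi i /\
         val (g (x, i)).1 = w ^ ((r i * i)%:Z - (psi i)%:Z) * a i * val x ^+ r i) /\
    (forall g, Wr d g ->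
       (CP d w (iota g) <-> exists psi (s : int) b,
          coprimez s (mC F d) /\ acts_as_wr d g psi (fun _ => s) b)) /\
    (forall g, Wr d g ->
       (FOCP d w (iota g) <-> exists psi b, acts_as_wr d g psi (fun _ => 1) b)).
Proof.
split; first by exists binv; [exact: betaK|exact: binvK].
exists iota; split.
  move=> g psi s b _ H x; have h := iota_wr H x; exact h.
split; first by move=> g h _ _; exact: iotaM.
split; first by move=> g h _ _; exact: iota_inj.
split.
  move=> p; split.
    case=> a [r [hr hb H]]; exists (iinv p); last exact: iinvK.
    have H' : forall x, val (iota (iinv p) x) = fgen d w a r (val x) by move=> x; rewrite iinvK.
    have [psi [Hs Hc]] := struct hr H'.
    exists psi, (fun j => Posz (r ((psi^-1)%g j))), (fun j => ((iinv p) (c1, (psi^-1)%g j)).1).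
    split; last exact: wr_of_struct Hs.
    by move=> j; rewrite coprimezE /=; exact: Hc.
  case=> g [psi [s [b [Hc H]]]] <-.
  exists (iota_a d w psi s b), (iota_r F d psi s); split.
  - by move=> i; exact: repm_range.
  - exact: bij_of_perm (iota g) (fgen0 _ _) (iota_wr H).
  - exact: iota_wr H.
split; first by move=> g _ x; rewrite iota_beta.
split.
  move=> a r hr hb.
  have fz (y : F) : y != 0 -> fgen d w a r y != 0.
    apply: contra => /eqP e; apply/eqP; apply: (bij_inj hb); by rewrite e fgen0.
  pose pf (y : Fstar F) : Fstar F := insubd (fstar1 F) (fgen d w a r (val y)).
  have vpf y : val (pf y) = fgen d w a r (val y) by rewrite val_insubd fz ?(valP y).
  have pf_inj : injective pf.
    by move=> x y e; apply: val_inj; apply: (bij_inj hb); rewrite -!vpf e.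
  pose p := perm pf_inj.
  have Hgp x : val (iota (iinv p) x) = fgen d w a r (val x) by rewrite iinvK permE vpf.
  split.
    have [psi [Hs _]] := struct hr Hgp.
    have hbm := blockmap_of Hgp (fun c i => (Hs c i).1).
    exists psi; split=> // psi' hb'; exact: blockmap_uniq hbm hb'.
  move=> psi hpsi g _ Hg x i.
  have [psi0 [Hs _]] := struct hr Hg.
  have e := blockmap_uniq (blockmap_of Hg (fun c i => (Hs c i).1)) hpsi.
  by subst psi0; exact: Hs.
split.
  move=> g _; split.
    case=> a [r0 [hr0 hb H2]].
    have [psi' [Hs Hc']] := struct (r := fun _ => r0) (fun _ => hr0) H2.
    exists psi', (Posz r0), (fun j => (g (c1, (psi'^-1)%g j)).1).
    split; first by rewrite coprimezE; exact: Hc' i0.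
    exact: wr_of_struct Hs.
  case=> psi' [s0 [b' [Hc0 H0]]].
  exists (iota_a d w psi' (fun _ => s0) b'), (repm F d s0); split.
  - exact: repm_range.
  - exact: bij_of_perm (iota g) (fgen0 _ _) (iota_wr H0).
  - exact: iota_wr H0.
move=> g _; split.
  case=> a [hb H2].
  have h1 : forall i : 'I_d, (0 < (fun _ => 1%N) i <= m)%N by move=> i; rewrite m_gt0.
  have [psi' [Hs _]] := struct h1 H2.
  exists psi', (fun j => (g (c1, (psi'^-1)%g j)).1).
  exact: wr_of_struct Hs.
case=> psi' [b' H0].
have e : (fun _ : 'I_d => 1%N) = iota_r F d psi' (fun _ => 1).
  by apply: functional_extensionality => i; rewrite /iota_r repm_1.
exists (iota_a d w psi' (fun _ => 1) b'); rewrite e; split.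
  exact: bij_of_perm (iota g) (fgen0 _ _) (iota_wr H0).
exact: iota_wr H0.
Qed.
End Main.

Theorem theorem1 (F : finFieldType) (d : nat) (w : F) :
  (0 < d)%N -> (d %| #|F|.-1)%N -> (#|F|.-1).-primitive_root w ->
  bijective (beta d w) /\
  exists iota : {perm Omega F d} -> {perm Fstar F},
    (* iota_w is given by the explicit formula *)
    (forall g psi s b, (forall j, coprimez (s j) (mC F d)) -> acts_as_wr d g psi s b ->
       forall x : Fstar F,
         val (iota g x) = fgen d w (iota_a d w psi s b) (iota_r F d psi s) (val x)) /\
    (* iota_w is a group isomorphism from the wreath product onto GCP(d,q) *)
    (forall g h, Wr d g -> Wr d h -> iota (g * h)%g = (iota g * iota h)%g) /\
    (forall g h, Wr d g -> Wr d h -> iota g = iota h -> g = h) /\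
    (forall p, GCP d w p <-> exists2 g, Wr d g & iota g = p) /\
    (* equivariance: beta (x^g) = beta(x)^(iota g) *)
    (forall g, Wr d g -> forall x, beta d w (g x) = iota g (beta d w x)) /\
    (* the inverse of iota_w *)
    (forall (a : 'I_d -> F) (r : 'I_d -> nat),
       (forall i, 0 < r i <= mC F d)%N -> bijective (fgen d w a r) ->
       (exists! psi : {perm 'I_d}, blockmap d w (fgen d w a r) psi) /\
       forall psi, blockmap d w (fgen d w a r) psi ->
       forall g, Wr d g -> (forall x : Fstar F, val (iota g x) = fgen d w a r (val x)) ->
       forall (x : Ctype F d) (i : 'I_d),
         (g (x, i)).2 = psi i /\
         val (g (x, i)).1 = w ^ ((r i * i)%:Z - (psi i)%:Z) * a i * val x ^+ r i) /\
    (* (1) *)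
    (forall g, Wr d g ->
       (CP d w (iota g) <-> exists psi (s : int) b,
          coprimez s (mC F d) /\ acts_as_wr d g psi (fun _ => s) b)) /\
    (* (2) *)
    (forall g, Wr d g ->
       (FOCP d w (iota g) <-> exists psi b, acts_as_wr d g psi (fun _ => 1) b)).
Proof.
move=> dpos ddiv wprim; exact (@main_sec F d w dpos ddiv wprim).
Qed.
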